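(* Let $D$ be a tangle diagram with an admissible decorated shadow $\mathrm{SL}_2(\mathbb{C})$-coloring $i\mapsto(g_i,L_i)$, $j\mapsto u_j$. Then the associated coloring $i\mapsto\chi_i=(a_i,b_i,m_i)$ is an octahedral coloring of $D$. That is, it satisfies the following conditions at every crossing. At every crossing, $m_{1'}=m_1$ and $m_{2'}=m_2$. At every positive crossing, with $A=1-\frac{m_1b_1}{b_2}\big(1-\frac{a_1}{m_1}\big)\big(1-\frac{1}{m_2a_2}\big)$, \[ a_{1'}=a_1A^{-1},\quad a_{2'}=a_2A,\quad b_{1'}=\frac{m_2b_2}{m_1}\Big(1-m_2a_2\big(1-\tfrac{b_2}{m_1b_1}\big)\Big)^{-1},\quad b_{2'}=b_1\Big(1-\frac{m_1}{a_1}\big(1-\tfrac{b_2}{m_1b_1}\big)\Big). \] At every negative crossing, with $\tilde A=1-\frac{b_2}{m_1b_1}(1-m_1a_1)\big(1-\frac{m_2}{a_2}\big)$, \[ a_{1'}=a_1\tilde A^{-1},\quad a_{2'}=a_2\tilde A,\quad b_{1'}=\frac{m_2b_2}{m_1}\Big(1-\frac{a_2}{m_2}\big(1-\tfrac{m_1b_1}{b_2}\big)\Big),\quad b_{2'}=b_1\Big(1-\frac{1}{m_1a_1}\big(1-\tfrac{m_1b_1}{b_2}\big)\Big)^{-1}. \]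
   Context: Tangle diagrams: a tangle diagram $D$ is an oriented tangle diagram in $[0,1]^2$, viewed as a 4-valent graph with crossings. Segments are the edges of the graph; a strand is cut at every crossing, over or under. Regions are the components of the complement of the graph in the square. Above and below: for a segment $i$, $i^{\uparrow}$ is the region on the left of $i$ with respect to its orientation and $i^{\downarrow}$ the region on its right. Crossing labels: rotate a crossing so both strands point right. The incoming segments are $1$ (upper left) and $2$ (lower left). The outgoing segments are $1'$ (lower right, continuing $1$) and $2'$ (upper right, continuing $2$). The crossing is positive if strand $1\to1'$ is over, negative if strand $2\to2'$ is over. Decorated $\mathrm{SL}_2(\mathbb{C})$-coloring: assign to each segment $i$ a matrix $g_i\in\mathrm{SL}_2(\mathbb{C})$ and a line $L_i\subset\mathbb{C}^2$ of row vectors with $L_ig_i=L_i$, such that: - at positive crossings, $g_{1'}=g_1$, $g_{2'}=g_1^{-1}g_2g_1$, $L_{1'}=L_1$ and $L_{2'}=L_2g_1$; - at negative crossings, $g_{2'}=g_2$, $g_{1'}=g_2g_1g_2^{-1}$, $L_{2'}=L_2$ and $L_{1'}=L_1g_2^{-1}$. Shadow coloring: nonzero column vectors $u_j\in\mathbb{C}^2$ for regions, with $u_{i^{\downarrow}}=g_iu_{i^{\uparrow}}$ for every segment $i$. Admissibility: write $e_2=(0,1)^T$ and $\det(x,y)$ for the determinant of the matrix with columns $x,y$. For each segment choose nonzero $v_i\in L_i$ and define $m_i$ by $v_ig_i=m_i^{-1}v_i$. The coloring is admissible if $\det(u_j,e_2)\ne0$ for all regions $j$ and $v_ie_2\ne0$,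 $v_iu_{i^{\uparrow}}\neq 0$ for all segments $i$. Associated coloring: $\chi_i=\big(\det(u_{i^{\downarrow}},e_2)/\det(u_{i^{\uparrow}},e_2),\ -v_ie_2/(v_iu_{i^{\uparrow}}),\ m_i\big)$. Octahedral coloring: an assignment of a triple $(a_i,b_i,m_i)$ of nonzero complex numbers to each segment satisfying the displayed relations at each crossing. *)

(* Defs.v *)
(* C is modelled as R[i] for an arbitrary R : realType
   (every realType is isomorphic to the real numbers). *)
From HB Require Import structures.
From mathcomp Require Import all_boot all_order all_algebra.
From mathcomp Require Import reals complex.
Set Implicit Arguments. Unset Strict Implicit. Unset Printing Implicit Defensive.
Import Order.TTheory GRing.Theory Num.Theory.
Local Open Scope ring_scope.

(* Combinatorial (local) data of an oriented tangle diagram.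
   - seg : segments (edges of the 4-valent graph), reg : regions,
     crs : crossings.
   - up i  = i^(up)   : the region on the left of segment i,
     down i = i^(down) : the region on the right of segment i.
   - at a crossing x (rotated so both strands point right):
     in1 x = 1 (upper left), in2 x = 2 (lower left),
     out1 x = 1' (lower right, continuing 1), out2 x = 2' (upper right,
     continuing 2); pos x = true iff the crossing is positive
     (strand 1 -> 1' is over).
   - the four regions around a crossing are glued as forced by the picture:
     top = 1^up = 2'^up, left = 1^down = 2^up, bottom = 2^down = 1'^down,
     right = 1'^up = 2'^down. *)
Record tangle_diagram := TangleDiagram {
  seg : finType;
  reg : finType;
  crs : finType;
  up : seg -> reg;
  down : seg -> reg;
  pos : crs -> bool;
  in1 : crs -> seg;
  in2 : crs -> seg;
  out1 : crs -> seg;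
  out2 : crs -> seg;
  reg_top : forall x, up (in1 x) = up (out2 x);
  reg_left : forall x, down (in1 x) = up (in2 x);
  reg_bottom : forall x, down (in2 x) = down (out1 x);
  reg_right : forall x, up (out1 x) = down (out2 x)
}.

Section Colorings.
Variable R : realType.
Local Notation C := R[i].
Variable D : tangle_diagram.

Definition e2 : 'cV[C]_2 := delta_mx ord_max ord0.

Definition det2 (x y : 'cV[C]_2) : C := \det (row_mx x y : 'M[C]_2).

(* Decorated SL_2(C)-coloring: g i in SL_2(C), L i a line of row vectors
   (represented as the row space of a square matrix of rank 1) with
   L_i g_i = L_i, and the crossing relations. *)
Definition decorated_coloring (g : seg D -> 'M[C]_2) (L : seg D -> 'M[C]_2) :=
  (forall i, \det (g i) = 1) /\
  (forall i, \rank (L i) = 1%N) /\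
  (forall i, (L i *m g i == L i)%MS) /\
  (forall x, pos x ->
     [/\ g (out1 x) = g (in1 x),
         g (out2 x) = invmx (g (in1 x)) *m g (in2 x) *m g (in1 x),
         (L (out1 x) == L (in1 x))%MS &
         (L (out2 x) == L (in2 x) *m g (in1 x))%MS]) /\
  (forall x, ~~ pos x ->
     [/\ g (out2 x) = g (in2 x),
         g (out1 x) = g (in2 x) *m g (in1 x) *m invmx (g (in2 x)),
         (L (out2 x) == L (in2 x))%MS &
         (L (out1 x) == L (in1 x) *m invmx (g (in2 x)))%MS]).

Definition shadow_coloring (g : seg D -> 'M[C]_2) (u : reg D -> 'cV[C]_2) :=
  (forall j, u j != 0) /\ (forall i, u (down i) = g i *m u (up i)).

Definition line_vectors (g L : seg D -> 'M[C]_2) (v : seg D -> 'rV[C]_2)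
    (m : seg D -> C) :=
  forall i, [/\ v i != 0, (v i <= L i)%MS & v i *m g i = (m i)^-1 *: v i].

Definition admissible (u : reg D -> 'cV[C]_2) (v : seg D -> 'rV[C]_2) :=
  (forall j, det2 (u j) e2 != 0) /\
  (forall i, (v i *m e2) 0 0 != 0) /\
  (forall i, (v i *m u (up i)) 0 0 != 0).

Definition assoc_a (u : reg D -> 'cV[C]_2) (i : seg D) : C :=
  det2 (u (down i)) e2 / det2 (u (up i)) e2.
Definition assoc_b (u : reg D -> 'cV[C]_2) (v : seg D -> 'rV[C]_2) (i : seg D) : C :=
  - (v i *m e2) 0 0 / (v i *m u (up i)) 0 0.

Definition octahedral_coloring (a b m : seg D -> C) :=
  (forall i, [/\ a i != 0, b i != 0 & m i != 0]) /\
  (forall x, m (out1 x) = m (in1 x) /\ m (out2 x) = m (in2 x)) /\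
  (forall x, pos x ->
     let a1 := a (in1 x) in let a2 := a (in2 x) in
     let b1 := b (in1 x) in let b2 := b (in2 x) in
     let m1 := m (in1 x) in let m2 := m (in2 x) in
     let A := 1 - m1 * b1 / b2 * (1 - a1 / m1) * (1 - (m2 * a2)^-1) in
     [/\ a (out1 x) = a1 * A^-1,
         a (out2 x) = a2 * A,
         b (out1 x) = m2 * b2 / m1 * (1 - m2 * a2 * (1 - b2 / (m1 * b1)))^-1 &
         b (out2 x) = b1 * (1 - m1 / a1 * (1 - b2 / (m1 * b1)))]) /\
  (forall x, ~~ pos x ->
     let a1 := a (in1 x) in let a2 := a (in2 x) in
     let b1 := b (in1 x) in let b2 := b (in2 x) in
     let m1 := m (in1 x) in let m2 := m (in2 x) in
     let At := 1 - b2 / (m1 * b1) * (1 - m1 * a1) * (1 - m2 / a2) in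
     [/\ a (out1 x) = a1 * At^-1,
         a (out2 x) = a2 * At,
         b (out1 x) = m2 * b2 / m1 * (1 - a2 / m2 * (1 - m1 * b1 / b2)) &
         b (out2 x) = b1 * (1 - (m1 * a1)^-1 * (1 - m1 * b1 / b2))^-1]).

End Colorings.

(* Main.v *)
Require Import Defs.
From HB Require Import structures.
From mathcomp Require Import all_boot all_order all_algebra.
From mathcomp Require Import reals complex.
From mathcomp Require Import ring.
Import Order.TTheory GRing.Theory Num.Theory.
Local Open Scope ring_scope.

Ltac fld := field; repeat (apply/andP; split); try done.

Lemma nzk (F : fieldType) (X Y k : F) : Y != 0 -> k != 0 -> Y * k = X -> X != 0.
Proof. by move=> hY hk <-; rewrite mulf_neq0. Qed.

Ltac kfield := field; repeat (apply/andP; split); try done.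

Ltac trk H X k := apply: (@nzk _ X _ k H); [by rewrite ?mulf_neq0 ?oner_eq0 | by kfield].

Ltac side m1 m2 :=
  match goal with
  | |- is_true (?X != 0) => first [ done | rewrite oppr_eq0; done | by rewrite oppr_eq0 oner_eq0 |
     match goal with H : is_true (?Y != 0) |- _ =>
       first [ trk H X 1 | trk H X m1 | trk H X m2 | trk H X (m1 * m2) | trk H X (m1 * m1)
             | trk H X (m2 * m2) | trk H X (m1 * m1 * m2) | trk H X (m1 * m2 * m2) | trk H X (m1 * m1 * m2 * m2) ]
     end ]
  end.

Lemma g1 (F : fieldType) (x y z w A : F) : y != 0 -> x != 0 -> x = y * A -> z * x = w * y -> z = w * A^-1.
Proof.
move=> yn xn hx hz.
have An : A != 0 by apply: contraNneq xn => A0; rewrite hx A0 mulr0.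
have -> : A = x / y by rewrite hx; fld.
by apply: (mulIf xn); rewrite hz; fld.
Qed.

Lemma g2 (F : fieldType) (b K c : F) : c != 0 -> b * K = c -> b = c * K^-1.
Proof.
move=> cn hb.
have Kn : K != 0 by apply: contraNneq cn => K0; rewrite -hb K0 mulr0.
by rewrite -hb; fld.
Qed.

Ltac fin m1 m2 := subst; field; repeat (apply/andP; split); try side m1 m2.

Lemma core_pos {F : fieldType} {x11 x12 x21 x22 y11 y12 y21 y22 t0 t1 s1 s2 m1 m2 : F}
  {L0 L1 O0 O1 R0 R1 D1 D2 D1' w0 w1 D2' : F}
  {a1 a2 a1' a2' b1 b2 b1' b2' : F} :
 m1 != 0 -> m2 != 0 ->
 x11 * x22 - x12 * x21 = 1 -> y11 * y22 - y12 * y21 = 1 ->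
 s1 * x11 + x21 = s1 / m1 -> s1 * x12 + x22 = 1 / m1 ->
 s2 * y11 + y21 = s2 / m2 -> s2 * y12 + y22 = 1 / m2 ->
 L0 = x11 * t0 + x12 * t1 -> L1 = x21 * t0 + x22 * t1 ->
 O0 = y11 * L0 + y12 * L1 -> O1 = y21 * L0 + y22 * L1 ->
 R0 = x22 * O0 - x12 * O1 -> R1 = - x21 * O0 + x11 * O1 ->
 D1 = s1 * t0 + t1 -> D2 = s2 * L0 + L1 ->
 D1' = s1 * R0 + R1 ->
 w0 = s2 * x11 + x21 -> w1 = s2 * x12 + x22 ->
 D2' = w0 * t0 + w1 * t1 ->
 t0 != 0 -> L0 != 0 -> O0 != 0 -> R0 != 0 -> D1 != 0 -> D2 != 0 -> D1' != 0 -> D2' != 0 -> w1 != 0 ->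
 a1 = L0 / t0 -> a2 = O0 / L0 -> a1' = O0 / R0 -> a2' = R0 / t0 ->
 b1 = - 1 / D1 -> b2 = - 1 / D2 -> b1' = - 1 / D1' -> b2' = - w1 / D2' ->
 let A := 1 - m1 * b1 / b2 * (1 - a1 / m1) * (1 - (m2 * a2)^-1) in
     [/\ a1' = a1 * A^-1,
         a2' = a2 * A,
         b1' = m2 * b2 / m1 * (1 - m2 * a2 * (1 - b2 / (m1 * b1)))^-1 &
         b2' = b1 * (1 - m1 / a1 * (1 - b2 / (m1 * b1)))].
Proof.
move=> m1n m2n d1 d2 e11 e12 e21 e22 HL0 HL1 HO0 HO1 HR0 HR1 HD1 HD2 HD1' Hw0 Hw1 HD2'.
move=> t0n l0n o0n r0n D1n D2n D1'n D2'n w1n Ha1 Ha2 Ha1' Ha2' Hb1 Hb2 Hb1' Hb2' A.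
have h22 : x22 = 1 / m1 - s1 * x12 by rewrite -e12; ring.
have h21 : x21 = s1 / m1 - s1 * x11 by rewrite -e11; ring.
have h11 : x11 = m1 + x12 * s1.
  rewrite h22 h21 in d1.
  have e : x11 - (m1 + x12 * s1) = m1 * (x11 * (1 / m1 - s1 * x12) - x12 * (s1 / m1 - s1 * x11) - 1) by fld.
  by apply/eqP; rewrite -subr_eq0 e d1 subrr mulr0.
have h22' : y22 = 1 / m2 - s2 * y12 by rewrite -e22; ring.
have h21' : y21 = s2 / m2 - s2 * y11 by rewrite -e21; ring.
have h11' : y11 = m2 + y12 * s2.
  rewrite h22' h21' in d2.
  have e : y11 - (m2 + y12 * s2) = m2 * (y11 * (1 / m2 - s2 * y12) - y12 * (s2 / m2 - s2 * y11) - 1) by fld.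
  by apply/eqP; rewrite -subr_eq0 e d2 subrr mulr0.
move: h21 h22 h21' h22'; rewrite h11 h11' => h21 h22 h21' h22'.
clear e11 e12 e21 e22 d1 d2.
subst x11 x21 x22 y11 y21 y22.
have HA : a2' = a2 * A by rewrite /A; fin m1 m2.
have Hp : a1' * a2' = a1 * a2 by fin m1 m2.
have HK : b1' * (1 - m2 * a2 * (1 - b2 / (m1 * b1))) = m2 * b2 / m1 by fin m1 m2.
have H4 : b2' = b1 * (1 - m1 / a1 * (1 - b2 / (m1 * b1))) by fin m1 m2.
have a2n : a2 != 0 by rewrite Ha2 mulf_neq0 ?invr_eq0.
have a2'n : a2' != 0 by rewrite Ha2' mulf_neq0 ?invr_eq0.
have b2n : b2 != 0 by rewrite Hb2 mulf_neq0 ?invr_eq0 ?oppr_eq0 ?oner_eq0.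
split => //.
- exact: g1 a2n a2'n HA Hp.
- by apply: g2 HK; rewrite !mulf_neq0 ?invr_eq0.
Qed.

Lemma core_neg {F : fieldType} {x11 x12 x21 x22 y11 y12 y21 y22 t0 t1 s1 s2 m1 m2 : F}
  {L0 L1 O0 O1 R0 R1 D1 D2 z0 z1 D1' D2' : F}
  {a1 a2 a1' a2' b1 b2 b1' b2' : F} :
 m1 != 0 -> m2 != 0 ->
 x11 * x22 - x12 * x21 = 1 -> y11 * y22 - y12 * y21 = 1 ->
 s1 * x11 + x21 = s1 / m1 -> s1 * x12 + x22 = 1 / m1 ->
 s2 * y11 + y21 = s2 / m2 -> s2 * y12 + y22 = 1 / m2 ->
 L0 = x11 * t0 + x12 * t1 -> L1 = x21 * t0 + x22 * t1 ->
 O0 = y11 * L0 + y12 * L1 -> O1 = y21 * L0 + y22 * L1 ->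
 R0 = y11 * t0 + y12 * t1 -> R1 = y21 * t0 + y22 * t1 ->
 D1 = s1 * t0 + t1 -> D2 = s2 * L0 + L1 ->
 z0 = s1 * y22 - y21 -> z1 = - (s1 * y12) + y11 ->
 D1' = z0 * R0 + z1 * R1 ->
 D2' = s2 * t0 + t1 ->
 t0 != 0 -> L0 != 0 -> O0 != 0 -> R0 != 0 -> D1 != 0 -> D2 != 0 -> D1' != 0 -> D2' != 0 -> z1 != 0 ->
 a1 = L0 / t0 -> a2 = O0 / L0 -> a1' = O0 / R0 -> a2' = R0 / t0 ->
 b1 = - 1 / D1 -> b2 = - 1 / D2 -> b1' = - z1 / D1' -> b2' = - 1 / D2' ->
 let At := 1 - b2 / (m1 * b1) * (1 - m1 * a1) * (1 - m2 / a2) in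
     [/\ a1' = a1 * At^-1,
         a2' = a2 * At,
         b1' = m2 * b2 / m1 * (1 - a2 / m2 * (1 - m1 * b1 / b2)) &
         b2' = b1 * (1 - (m1 * a1)^-1 * (1 - m1 * b1 / b2))^-1].
Proof.
move=> m1n m2n d1 d2 e11 e12 e21 e22 HL0 HL1 HO0 HO1 HR0 HR1 HD1 HD2 Hz0 Hz1 HD1' HD2'.
move=> t0n l0n o0n r0n D1n D2n D1'n D2'n z1n Ha1 Ha2 Ha1' Ha2' Hb1 Hb2 Hb1' Hb2' At.
have h22 : x22 = 1 / m1 - s1 * x12 by rewrite -e12; ring.
have h21 : x21 = s1 / m1 - s1 * x11 by rewrite -e11; ring.
have h11 : x11 = m1 + x12 * s1.
  rewrite h22 h21 in d1.
  have e : x11 - (m1 + x12 * s1) = m1 * (x11 * (1 / m1 - s1 * x12) - x12 * (s1 / m1 - s1 * x11) - 1) by fld.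
  by apply/eqP; rewrite -subr_eq0 e d1 subrr mulr0.
have h22' : y22 = 1 / m2 - s2 * y12 by rewrite -e22; ring.
have h21' : y21 = s2 / m2 - s2 * y11 by rewrite -e21; ring.
have h11' : y11 = m2 + y12 * s2.
  rewrite h22' h21' in d2.
  have e : y11 - (m2 + y12 * s2) = m2 * (y11 * (1 / m2 - s2 * y12) - y12 * (s2 / m2 - s2 * y11) - 1) by fld.
  by apply/eqP; rewrite -subr_eq0 e d2 subrr mulr0.
move: h21 h22 h21' h22'; rewrite h11 h11' => h21 h22 h21' h22'.
clear e11 e12 e21 e22 d1 d2.
subst x11 x21 x22 y11 y21 y22.
have HA : a2' = a2 * At by rewrite /At; fin m1 m2.
have Hp : a1' * a2' = a1 * a2 by fin m1 m2.
have H3 : b1' = m2 * b2 / m1 * (1 - a2 / m2 * (1 - m1 * b1 / b2)) by fin m1 m2.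
have HK : b2' * (1 - (m1 * a1)^-1 * (1 - m1 * b1 / b2)) = b1 by fin m1 m2.
have a2n : a2 != 0 by rewrite Ha2 mulf_neq0 ?invr_eq0.
have a2'n : a2' != 0 by rewrite Ha2' mulf_neq0 ?invr_eq0.
have b1n : b1 != 0 by rewrite Hb1 mulf_neq0 ?invr_eq0 ?oppr_eq0 ?oner_eq0.
split => //.
- exact: g1 a2n a2'n HA Hp.
- by apply: g2 HK.
Qed.

Notation i0 := (@ord0 1).
Notation i1 := (@ord_max 1).

Ltac normlift := repeat match goal with |- context [@lift 2 ?a ?b] =>
  let v := eval vm_compute in (nat_of_ord (@lift 2 a b)) in
  (match v with
   | 0%N => rewrite (_ : @lift 2 a b = i0); last exact: val_inj
   | _ => rewrite (_ : @lift 2 a b = i1); last exact: val_inj end) end.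

Lemma det22 (F : fieldType) (M : 'M[F]_2) : \det M = M i0 i0 * M i1 i1 - M i0 i1 * M i1 i0.
Proof.
rewrite (expand_det_row _ i0) !big_ord_recl big_ord0 /cofactor !det_mx11 !mxE /=.
normlift. rewrite !addn0 !add0n expr0 expr1; ring.
Qed.
Lemma mul22 (F : fieldType) m n (A : 'M[F]_(m,2)) (B : 'M[F]_(2,n)) i j : (A *m B) i j = A i i0 * B i0 j + A i i1 * B i1 j.
Proof. rewrite !mxE !big_ord_recl big_ord0 addr0. normlift. by []. Qed.

Lemma det2e2 (R : realType) (x : 'cV[R[i]]_2) : det2 x (e2 R) = x i0 0.
Proof.
have s0 : @split 1 1 i0 = inl ord0.
  by rewrite (_ : i0 = @unsplit 1 1 (inl ord0)) ?unsplitK //; apply: val_inj.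
have s1 : @split 1 1 i1 = inr ord0.
  by rewrite (_ : i1 = @unsplit 1 1 (inr ord0)) ?unsplitK //; apply: val_inj.
rewrite /det2 det22 !mxE s0 s1 /e2 !mxE /=; ring.
Qed.
Lemma ve2 (R : realType) (w : 'rV[R[i]]_2) : (w *m e2 R) 0 0 = w 0 i1.
Proof. rewrite mul22 /e2 !mxE /=; ring. Qed.

Set Implicit Arguments. Unset Strict Implicit.

Lemma adj22 (F : fieldType) (M : 'M[F]_2) :
  [/\ \adj M i0 i0 = M i1 i1, \adj M i0 i1 = - M i0 i1, \adj M i1 i0 = - M i1 i0 & \adj M i1 i1 = M i0 i0].
Proof.
rewrite !mxE /cofactor !det_mx11 !mxE /=. normlift.
by rewrite !addn0 !add0n addn1 expr0 expr1 mulN1r; split => //; ring.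
Qed.

Lemma invmx_adj (F : fieldType) (M : 'M[F]_2) : \det M = 1 -> invmx M = \adj M.
Proof. by move=> h; rewrite /invmx unitmxE h unitr1 invr1 scale1r. Qed.

Lemma unit1 (F : fieldType) (M : 'M[F]_2) : \det M = 1 -> M \in unitmx.
Proof. by move=> h; rewrite unitmxE h unitr1. Qed.

Lemma mv22 (F : fieldType) (A : 'M[F]_2) (x y : 'cV[F]_2) : y = A *m x ->
  y i0 0 = A i0 i0 * x i0 0 + A i0 i1 * x i1 0 /\ y i1 0 = A i1 i0 * x i0 0 + A i1 i1 * x i1 0.
Proof. by move=> ->; rewrite !mul22. Qed.

Lemma detE (F : fieldType) (M : 'M[F]_2) : \det M = 1 -> M i0 i0 * M i1 i1 - M i0 i1 * M i1 i0 = 1.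
Proof. by rewrite det22. Qed.

Lemma eigs (F : fieldType) (w : 'rV[F]_2) (G : 'M[F]_2) (mm : F) : mm != 0 -> w 0 i1 != 0 ->
  w *m G = mm^-1 *: w ->
  (w 0 i0 / w 0 i1) * G i0 i0 + G i1 i0 = (w 0 i0 / w 0 i1) / mm /\
  (w 0 i0 / w 0 i1) * G i0 i1 + G i1 i1 = 1 / mm.
Proof.
move=> mn qn e.
have e0 : (w *m G) 0 i0 = (mm^-1 *: w) 0 i0 by rewrite e.
have e1 : (w *m G) 0 i1 = (mm^-1 *: w) 0 i1 by rewrite e.
rewrite mul22 !mxE in e0; rewrite mul22 !mxE in e1.
split.
- have -> : w 0 i0 / w 0 i1 * G i0 i0 + G i1 i0 = (w 0 i0 * G i0 i0 + w 0 i1 * G i1 i0) / w 0 i1 by fld.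
  by rewrite e0; fld.
- have -> : w 0 i0 / w 0 i1 * G i0 i1 + G i1 i1 = (w 0 i0 * G i0 i1 + w 0 i1 * G i1 i1) / w 0 i1 by fld.
  by rewrite e1; fld.
Qed.

Lemma bform (R : realType) (w : 'rV[R[i]]_2) (y : 'cV[R[i]]_2) (k z0 z1 : R[i]) : k != 0 ->
  w 0 i0 = k * z0 -> w 0 i1 = k * z1 ->
  - (w *m e2 R) 0 0 / (w *m y) 0 0 = - z1 / (z0 * y i0 0 + z1 * y i1 0).
Proof.
move=> kn h0 h1; rewrite ve2 mul22 h0 h1.
have -> : k * z0 * y i0 0 + k * z1 * y i1 0 = k * (z0 * y i0 0 + z1 * y i1 0) by ring.
have [E|E] := eqVneq (z0 * y i0 0 + z1 * y i1 0) 0.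
  by rewrite E mulr0 !invr0 !mulr0.
by fld.
Qed.

Lemma dform (R : realType) (w : 'rV[R[i]]_2) (y : 'cV[R[i]]_2) (k z0 z1 : R[i]) :
  w 0 i0 = k * z0 -> w 0 i1 = k * z1 ->
  (w *m y) 0 0 != 0 -> z0 * y i0 0 + z1 * y i1 0 != 0.
Proof.
move=> h0 h1; rewrite mul22 h0 h1.
have -> : k * z0 * y i0 0 + k * z1 * y i1 0 = k * (z0 * y i0 0 + z1 * y i1 0) by ring.
by apply: contraNneq => ->; rewrite mulr0.
Qed.

Lemma eform (R : realType) (w : 'rV[R[i]]_2) (k z0 z1 : R[i]) :
  w 0 i0 = k * z0 -> w 0 i1 = k * z1 -> (w *m e2 R) 0 0 != 0 -> z1 != 0.
Proof. by move=> h0 h1; rewrite ve2 h1; apply: contraNneq => ->; rewrite mulr0. Qed.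

Lemma meq (F : fieldType) (w : 'rV[F]_2) a b : w != 0 -> a *: w = b *: w -> a = b.
Proof.
move=> hw e; apply/eqP; rewrite -subr_eq0.
have : (a - b) *: w == 0 by rewrite scalerBl e subrr.
by rewrite scaler_eq0 (negbTE hw) orbF.
Qed.

Lemma mrel (F : fieldType) (w w0 : 'rV[F]_2) (G : 'M[F]_2) (a b c : F) : w != 0 -> a != 0 -> b != 0 ->
  w = c *: w0 -> w *m G = a^-1 *: w -> w0 *m G = b^-1 *: w0 -> a = b.
Proof.
move=> wn an bn hw e1 e2.
have : a^-1 = b^-1.
  apply: (meq wn); rewrite -e1 hw -scalemxAl e2 !scalerA mulrC //.
by move/(congr1 (@GRing.inv F)); rewrite !invrK.
Qed.

Lemma line_scal (F : fieldType) (L1 : 'M[F]_2) (w w' : 'rV[F]_2) : \rank L1 = 1%N -> w != 0 ->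
  (w <= L1)%MS -> (w' <= L1)%MS -> exists c, w' = c *: w.
Proof.
move=> rL wn hw hw'.
have : (w == L1)%MS by rewrite -(mxrank_leqif_eq hw).2 rank_rV wn rL.
case/andP => _ hL.
by apply/sub_rVP; apply: submx_trans hw' hL.
Qed.

Lemma mnz (F : fieldType) (w : 'rV[F]_2) (G : 'M[F]_2) (mm : F) : w != 0 -> \det G = 1 ->
  w *m G = mm^-1 *: w -> mm != 0.
Proof.
move=> wn hd e; apply: contraNneq wn => m0.
have -> : w = (w *m G) *m invmx G by rewrite mulmxK // unit1.
by rewrite e m0 invr0 scale0r mul0mx.
Qed.

Unset Implicit Arguments. Set Strict Implicit.

Theorem theorem2p11 (R : realType) (D : tangle_diagram)
  (g L : seg D -> 'M[R[i]]_2) (u : reg D -> 'cV[R[i]]_2)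
  (v : seg D -> 'rV[R[i]]_2) (m : seg D -> R[i]) :
  decorated_coloring g L ->
  shadow_coloring g u ->
  line_vectors g L v m ->
  admissible u v ->
  octahedral_coloring (assoc_a u) (assoc_b u v) m.
Proof.
move=> dc sc lv ad.
case: dc => hdet [hrank [hLg [hpos hneg]]].
case: sc => hu0 hu.
case: ad => hdet2 [hve2 hvu].
have vn i : v i != 0 by case: (lv i).
have vL i : (v i <= L i)%MS by case: (lv i).
have ve i : v i *m g i = (m i)^-1 *: v i by case: (lv i).
have mn i : m i != 0 := mnz (vn i) (hdet i) (ve i).
have qn i : v i 0 i1 != 0 by have := hve2 i; rewrite ve2.
have aE i : assoc_a u i = (u (down i)) i0 0 / (u (up i)) i0 0 by rewrite /assoc_a !det2e2.
have uz j : (u j) i0 0 != 0 by have := hdet2 j; rewrite det2e2.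
have gU i : g i \in unitmx := unit1 (hdet i).
have nzMr (w : 'rV[R[i]]_2) (G : 'M[R[i]]_2) : G \in unitmx -> w != 0 -> w *m G != 0.
  move=> hG wn; apply: contraNneq wn => h.
  by rewrite -(mulmxK hG w) h mul0mx.
have cpos : forall x, pos x -> exists c1 c2,
    v (out1 x) = c1 *: v (in1 x) /\ v (out2 x) = c2 *: (v (in2 x) *m g (in1 x)).
  move=> x hx; case: (hpos x hx) => g1o g2o L1o L2o.
  have [c1 hc1] : exists c, v (out1 x) = c *: v (in1 x).
    apply: (line_scal (hrank (in1 x)) (vn _) (vL _)).
    by apply: submx_trans (vL (out1 x)) _; case/andP: L1o.
  have [c2 hc2] : exists c, v (out2 x) = c *: (v (in2 x) *m g (in1 x)).
    apply: (line_scal (L1 := L (in2 x) *m g (in1 x))).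
    - by rewrite mxrankMfree ?row_free_unit // hrank.
    - exact: nzMr.
    - exact: submxMr.
    - by apply: submx_trans (vL (out2 x)) _; case/andP: L2o.
  by exists c1, c2.
have cneg : forall x, ~~ pos x -> exists c1 c2,
    v (out1 x) = c1 *: (v (in1 x) *m invmx (g (in2 x))) /\ v (out2 x) = c2 *: v (in2 x).
  move=> x hx; case: (hneg x hx) => g2o g1o L2o L1o.
  have [c2 hc2] : exists c, v (out2 x) = c *: v (in2 x).
    apply: (line_scal (hrank (in2 x)) (vn _) (vL _)).
    by apply: submx_trans (vL (out2 x)) _; case/andP: L2o.
  have [c1 hc1] : exists c, v (out1 x) = c *: (v (in1 x) *m invmx (g (in2 x))).
    apply: (line_scal (L1 := L (in1 x) *m invmx (g (in2 x)))).
    - by rewrite mxrankMfree ?row_free_unit ?unitmx_inv // hrank.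
    - by apply: nzMr; rewrite ?unitmx_inv.
    - exact: submxMr.
    - by apply: submx_trans (vL (out1 x)) _; case/andP: L1o.
  by exists c1, c2.
split.
  move=> i; split.
  - by rewrite aE mulf_neq0 ?invr_eq0.
  - by rewrite /assoc_b mulf_neq0 ?invr_eq0 ?oppr_eq0.
  - exact: mn.
split.
  move=> x; case: (boolP (pos x)) => hx.
    case: (hpos x hx) => g1o g2o _ _.
    have [c1 [c2 [hc1 hc2]]] := cpos x hx.
    split.
    + apply: (mrel (vn (out1 x)) (mn _) (mn _) hc1 (ve _)); rewrite g1o; exact: ve.
    + apply: (mrel (vn (out2 x)) (mn _) (mn _) hc2 (ve _)).
      by rewrite g2o !mulmxA mulmxK // ve -scalemxAl.
  case: (hneg x hx) => g2o g1o _ _.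
  have [c1 [c2 [hc1 hc2]]] := cneg x hx.
  split.
  + apply: (mrel (vn (out1 x)) (mn _) (mn _) hc1 (ve _)).
    by rewrite g1o !mulmxA mulmxKV // ve -scalemxAl.
  + apply: (mrel (vn (out2 x)) (mn _) (mn _) hc2 (ve _)); rewrite g2o; exact: ve.
split.
  move=> x hx; case: (hpos x hx) => g1o g2o _ _.
  have [c1 [c2 [hc1 hc2]]] := cpos x hx.
  have c1n : c1 != 0 by apply: contraNneq (vn (out1 x)) => c0; rewrite hc1 c0 scale0r.
  have c2n : c2 != 0 by apply: contraNneq (vn (out2 x)) => c0; rewrite hc2 c0 scale0r.
  have HLv : u (down (in1 x)) = g (in1 x) *m u (up (in1 x)) := hu (in1 x).
  have HOv : u (down (in2 x)) = g (in2 x) *m u (down (in1 x)) by rewrite hu (reg_left x).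
  have HRv : u (up (out1 x)) = \adj (g (in1 x)) *m u (down (in2 x)).
    have h := hu (out1 x); rewrite -(reg_bottom x) g1o in h.
    by rewrite h -(invmx_adj (hdet _)) mulKmx.
  have [HL0 HL1] := mv22 HLv.
  have [HO0 HO1] := mv22 HOv.
  have [HR0' HR1'] := mv22 HRv.
  case: (adj22 (g (in1 x))) => A00 A01 A10 A11.
  rewrite A00 A01 A10 A11 in HR0' HR1'.
  set t := u (up (in1 x)) in HL0 HL1 *.
  set x11 := g (in1 x) i0 i0 in HL0 HL1 HR0' HR1' *.
  set x12 := g (in1 x) i0 i1 in HL0 HL1 HR0' HR1' *.
  set x21 := g (in1 x) i1 i0 in HL0 HL1 HR0' HR1' *.
  set x22 := g (in1 x) i1 i1 in HL0 HL1 HR0' HR1' *.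
  set O0 := u (down (in2 x)) i0 0 in HO0 HR0' HR1' *.
  set O1 := u (down (in2 x)) i1 0 in HO1 HR0' HR1' *.
  have HR0 : u (up (out1 x)) i0 0 = x22 * O0 - x12 * O1 by rewrite HR0'; ring.
  have HR1 : u (up (out1 x)) i1 0 = - x21 * O0 + x11 * O1 by rewrite HR1'; ring.
  have [e11 e12] := eigs (mn _) (qn _) (ve (in1 x)).
  have [e21 e22] := eigs (mn _) (qn _) (ve (in2 x)).
  have d1 := detE (hdet (in1 x)).
  have d2 := detE (hdet (in2 x)).
  set s1 := v (in1 x) 0 i0 / v (in1 x) 0 i1 in e11 e12 *.
  set s2 := v (in2 x) 0 i0 / v (in2 x) 0 i1 in e21 e22 *.
  have p1E : v (in1 x) 0 i0 = v (in1 x) 0 i1 * s1 by rewrite /s1; fld; exact: qn.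
  have p2E : v (in2 x) 0 i0 = v (in2 x) 0 i1 * s2 by rewrite /s2; fld; exact: qn.
  have q1E : v (in1 x) 0 i1 = v (in1 x) 0 i1 * 1 by rewrite mulr1.
  have q2E : v (in2 x) 0 i1 = v (in2 x) 0 i1 * 1 by rewrite mulr1.
  have p1'E : v (out1 x) 0 i0 = (c1 * v (in1 x) 0 i1) * s1 by rewrite hc1 mxE p1E mulrA.
  have q1'E : v (out1 x) 0 i1 = (c1 * v (in1 x) 0 i1) * 1 by rewrite hc1 mxE mulr1.
  have p2'E : v (out2 x) 0 i0 = (c2 * v (in2 x) 0 i1) * (s2 * x11 + x21).
    by rewrite hc2 mxE mul22 p2E /x11 /x12 /x21 /x22; ring.
  have q2'E : v (out2 x) 0 i1 = (c2 * v (in2 x) 0 i1) * (s2 * x12 + x22).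
    by rewrite hc2 mxE mul22 p2E /x11 /x12 /x21 /x22; ring.
  have k1n : c1 * v (in1 x) 0 i1 != 0 by rewrite mulf_neq0.
  have k2n : c2 * v (in2 x) 0 i1 != 0 by rewrite mulf_neq0.
  have Ha1 : assoc_a u (in1 x) = u (down (in1 x)) i0 0 / t i0 0 by rewrite aE.
  have Ha2 : assoc_a u (in2 x) = O0 / u (down (in1 x)) i0 0 by rewrite aE -(reg_left x).
  have Ha1' : assoc_a u (out1 x) = O0 / u (up (out1 x)) i0 0 by rewrite aE -(reg_bottom x).
  have Ha2' : assoc_a u (out2 x) = u (up (out1 x)) i0 0 / t i0 0 by rewrite aE -(reg_right x) -(reg_top x).
  have Hb1 : assoc_b u v (in1 x) = - 1 / (s1 * t i0 0 + t i1 0).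
    by rewrite /assoc_b (bform _ (qn _) p1E q1E) mul1r.
  have Hb2 : assoc_b u v (in2 x) = - 1 / (s2 * u (down (in1 x)) i0 0 + u (down (in1 x)) i1 0).
    by rewrite /assoc_b -(reg_left x) (bform _ (qn _) p2E q2E) mul1r.
  have Hb1' : assoc_b u v (out1 x) = - 1 / (s1 * u (up (out1 x)) i0 0 + u (up (out1 x)) i1 0).
    by rewrite /assoc_b (bform _ k1n p1'E q1'E) mul1r.
  have Hb2' : assoc_b u v (out2 x) = - (s2 * x12 + x22) / ((s2 * x11 + x21) * t i0 0 + (s2 * x12 + x22) * t i1 0).
    by rewrite /assoc_b -(reg_top x) (bform _ k2n p2'E q2'E).
  have D1n : s1 * t i0 0 + t i1 0 != 0.
    by have := dform p1E q1E (hvu (in1 x)); rewrite mul1r.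
  have D2n : s2 * u (down (in1 x)) i0 0 + u (down (in1 x)) i1 0 != 0.
    by have := dform p2E q2E (hvu (in2 x)); rewrite -(reg_left x) mul1r.
  have D1'n : s1 * u (up (out1 x)) i0 0 + u (up (out1 x)) i1 0 != 0.
    by have := dform p1'E q1'E (hvu (out1 x)); rewrite mul1r.
  have D2'n : (s2 * x11 + x21) * t i0 0 + (s2 * x12 + x22) * t i1 0 != 0.
    by have := dform p2'E q2'E (hvu (out2 x)); rewrite -(reg_top x).
  have w1n : s2 * x12 + x22 != 0 := eform p2'E q2'E (hve2 (out2 x)).
  exact: (core_pos (mn _) (mn _) d1 d2 e11 e12 e21 e22 HL0 HL1 HO0 HO1 HR0 HR1
    erefl erefl erefl erefl erefl erefl (uz _) (uz _) (uz _) (uz _) D1n D2n D1'n D2'n w1n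
    Ha1 Ha2 Ha1' Ha2' Hb1 Hb2 Hb1' Hb2').
move=> x hx; case: (hneg x hx) => g2o g1o _ _.
have [c1 [c2 [hc1 hc2]]] := cneg x hx.
have c1n : c1 != 0 by apply: contraNneq (vn (out1 x)) => c0; rewrite hc1 c0 scale0r.
have c2n : c2 != 0 by apply: contraNneq (vn (out2 x)) => c0; rewrite hc2 c0 scale0r.
rewrite (invmx_adj (hdet _)) in hc1.
have HLv : u (down (in1 x)) = g (in1 x) *m u (up (in1 x)) := hu (in1 x).
have HOv : u (down (in2 x)) = g (in2 x) *m u (down (in1 x)) by rewrite hu (reg_left x).
have HRv : u (up (out1 x)) = g (in2 x) *m u (up (in1 x)).
  by rewrite (reg_right x) hu g2o -(reg_top x).
have [HL0 HL1] := mv22 HLv.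
have [HO0 HO1] := mv22 HOv.
have [HR0 HR1] := mv22 HRv.
have [e11 e12] := eigs (mn _) (qn _) (ve (in1 x)).
have [e21 e22] := eigs (mn _) (qn _) (ve (in2 x)).
have d1 := detE (hdet (in1 x)).
have d2 := detE (hdet (in2 x)).
set t := u (up (in1 x)) in HL0 HL1 HR0 HR1 *.
set s1 := v (in1 x) 0 i0 / v (in1 x) 0 i1 in e11 e12 *.
set s2 := v (in2 x) 0 i0 / v (in2 x) 0 i1 in e21 e22 *.
have p1E : v (in1 x) 0 i0 = v (in1 x) 0 i1 * s1 by rewrite /s1; fld; exact: qn.
have p2E : v (in2 x) 0 i0 = v (in2 x) 0 i1 * s2 by rewrite /s2; fld; exact: qn.
have q1E : v (in1 x) 0 i1 = v (in1 x) 0 i1 * 1 by rewrite mulr1.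
have q2E : v (in2 x) 0 i1 = v (in2 x) 0 i1 * 1 by rewrite mulr1.
case: (adj22 (g (in2 x))) => A00 A01 A10 A11.
have p1'E : v (out1 x) 0 i0 = (c1 * v (in1 x) 0 i1) * (s1 * g (in2 x) i1 i1 - g (in2 x) i1 i0).
  by rewrite hc1 mxE mul22 A00 A10 p1E; ring.
have q1'E : v (out1 x) 0 i1 = (c1 * v (in1 x) 0 i1) * (- (s1 * g (in2 x) i0 i1) + g (in2 x) i0 i0).
  by rewrite hc1 mxE mul22 A01 A11 p1E; ring.
have p2'E : v (out2 x) 0 i0 = (c2 * v (in2 x) 0 i1) * s2 by rewrite hc2 mxE p2E mulrA.
have q2'E : v (out2 x) 0 i1 = (c2 * v (in2 x) 0 i1) * 1 by rewrite hc2 mxE mulr1.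
have k1n : c1 * v (in1 x) 0 i1 != 0 by rewrite mulf_neq0.
have k2n : c2 * v (in2 x) 0 i1 != 0 by rewrite mulf_neq0.
have Ha1 : assoc_a u (in1 x) = u (down (in1 x)) i0 0 / t i0 0 by rewrite aE.
have Ha2 : assoc_a u (in2 x) = u (down (in2 x)) i0 0 / u (down (in1 x)) i0 0 by rewrite aE -(reg_left x).
have Ha1' : assoc_a u (out1 x) = u (down (in2 x)) i0 0 / u (up (out1 x)) i0 0 by rewrite aE -(reg_bottom x).
have Ha2' : assoc_a u (out2 x) = u (up (out1 x)) i0 0 / t i0 0 by rewrite aE -(reg_right x) -(reg_top x).
have Hb1 : assoc_b u v (in1 x) = - 1 / (s1 * t i0 0 + t i1 0).
  by rewrite /assoc_b (bform _ (qn _) p1E q1E) mul1r.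
have Hb2 : assoc_b u v (in2 x) = - 1 / (s2 * u (down (in1 x)) i0 0 + u (down (in1 x)) i1 0).
  by rewrite /assoc_b -(reg_left x) (bform _ (qn _) p2E q2E) mul1r.
have Hb1' : assoc_b u v (out1 x) = - (- (s1 * g (in2 x) i0 i1) + g (in2 x) i0 i0) /
    ((s1 * g (in2 x) i1 i1 - g (in2 x) i1 i0) * u (up (out1 x)) i0 0 +
     (- (s1 * g (in2 x) i0 i1) + g (in2 x) i0 i0) * u (up (out1 x)) i1 0).
  by rewrite /assoc_b (bform _ k1n p1'E q1'E).
have Hb2' : assoc_b u v (out2 x) = - 1 / (s2 * t i0 0 + t i1 0).
  by rewrite /assoc_b -(reg_top x) (bform _ k2n p2'E q2'E) mul1r.
have D1n : s1 * t i0 0 + t i1 0 != 0.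
  by have := dform p1E q1E (hvu (in1 x)); rewrite mul1r.
have D2n : s2 * u (down (in1 x)) i0 0 + u (down (in1 x)) i1 0 != 0.
  by have := dform p2E q2E (hvu (in2 x)); rewrite -(reg_left x) mul1r.
have D1'n : (s1 * g (in2 x) i1 i1 - g (in2 x) i1 i0) * u (up (out1 x)) i0 0 +
     (- (s1 * g (in2 x) i0 i1) + g (in2 x) i0 i0) * u (up (out1 x)) i1 0 != 0.
  exact: dform p1'E q1'E (hvu (out1 x)).
have D2'n : s2 * t i0 0 + t i1 0 != 0.
  by have := dform p2'E q2'E (hvu (out2 x)); rewrite -(reg_top x) mul1r.
have z1n : - (s1 * g (in2 x) i0 i1) + g (in2 x) i0 i0 != 0 := eform p1'E q1'E (hve2 (out1 x)).
exact: (core_neg (mn _) (mn _) d1 d2 e11 e12 e21 e22 HL0 HL1 HO0 HO1 HR0 HR1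
  erefl erefl erefl erefl erefl erefl (uz _) (uz _) (uz _) (uz _) D1n D2n D1'n D2'n z1n
  Ha1 Ha2 Ha1' Ha2' Hb1 Hb2 Hb1' Hb2').
Qed.
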